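(* Let $1\le s\le d$ and let $J\subseteq J_{\mathbb C}$. Then $J\in\mathcal J(s,\mathbb C)$ if and only if there exist $V\in\mathcal G(s,d)$ and a block column echelon basis $W$ of $V$ (with data $r$, $b_1,\dots,b_r$, $k_1<\dots<k_r$) such that $$\{k_j+1:\ j\in\{1,\dots,r\},\ b_j=1,\ d_{k_j+1}=2\}=J.$$
   Context: Fix $d_1,\dots,d_k\in\{1,2\}$ with $d=d_1+\dots+d_k$ and let $J_{\mathbb C}=\{j\in\{1,\dots,k\}:d_j=2\}$. Define $\mathcal J(s,\mathbb C)=\{J\subseteq J_{\mathbb C}:\ |J|\le\min(s,d-s),\ \text{and } s-|J| \text{ is even if } |J_{\mathbb C}|=k\}$. Block column echelon basis: the rows of $W\in\mathbb R^{d\times s}$ are partitioned into consecutive blocks of sizes $d_1,\dots,d_k$. A block column echelon basis of $V\in\mathcal G(s,d)$ is a $W\in\mathbb R^{d\times s}$ with $\mathrm{range}(W)=V$ whose columns are partitioned into consecutive groups of sizes $b_1,\dots,b_r\in\{1,2\}$, $\sum_jb_j=s$, such that, writing $W_{ij}\in\mathbb R^{d_i\times b_j}$ for the resulting blocks, there are indices $0\le k_1<\dots<k_r<k$ with $W_{ij}=0$ for $i\le k_j$ and $\mathrm{rank}(W_{k_j+1,j})=b_j$ (so $b_j=1$ whenever $d_{k_j+1}=1$). $\mathcal G(s,d)$ is the Grassmannian of $s$-dimensional subspaces of $\mathbb R^d$. *)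

(* Defs.v *)
(* Blocks and column groups are indexed from 0 (paper: from 1). *)
From HB Require Import structures.
From mathcomp Require Import all_boot all_order all_algebra.
From mathcomp Require Import reals.
Set Implicit Arguments. Unset Strict Implicit. Unset Printing Implicit Defensive.
Import Order.TTheory GRing.Theory Num.Theory.
Local Open Scope ring_scope.

Section Defs.
Variable R : realType.

Definition dtot (k : nat) (dd : 'I_k -> nat) : nat := (\sum_(i < k) dd i)%N.

Definition JC (k : nat) (dd : 'I_k -> nat) : {set 'I_k} := [set i | dd i == 2%N].

Definition calJ (k : nat) (dd : 'I_k -> nat) (s : nat) (J : {set 'I_k}) : bool :=
  [&& J \subset JC dd,
      (#|J| <= minn s (dtot dd - s))%N
    & (#|JC dd| == k) ==> ~~ odd (s - #|J|)].

Definition roff (k : nat) (dd : 'I_k -> nat) (i : nat) : nat :=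
  (\sum_(l < k | (l < i)%N) dd l)%N.
Definition coff (r : nat) (bb : 'I_r -> nat) (j : nat) : nat :=
  (\sum_(l < r | (l < j)%N) bb l)%N.

(* entry (x,y) of W, 0 outside the matrix *)
Definition mxentry (m n : nat) (W : 'M[R]_(m, n)) (x y : nat) : R :=
  match insub x, insub y with
  | Some x', Some y' => W x' y'
  | _, _ => 0
  end.

Definition bce_block (k : nat) (dd : 'I_k -> nat) (s r : nat) (bb : 'I_r -> nat)
    (W : 'M[R]_(dtot dd, s)) (i : 'I_k) (j : 'I_r) : 'M[R]_(dd i, bb j) :=
  \matrix_(a < dd i, c < bb j) mxentry W (roff dd i + a) (coff bb j + c).

(* W is in block column echelon form with data r, b_1..b_r, k_1<..<k_r
   (kk j is the 0-based index of block k_j+1, i.e. kk j = k_j) *)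
Definition is_bce (k : nat) (dd : 'I_k -> nat) (s : nat) (W : 'M[R]_(dtot dd, s))
    (r : nat) (bb : 'I_r -> nat) (kk : 'I_r -> 'I_k) : Prop :=
  [/\ forall j, bb j = 1%N \/ bb j = 2%N,
      (\sum_(j < r) bb j)%N = s,
      forall j1 j2 : 'I_r, (j1 < j2)%N -> (kk j1 < kk j2)%N,
      forall (j : 'I_r) (i : 'I_k), (i < kk j)%N -> bce_block bb W i j = 0
    & forall j : 'I_r, \rank (bce_block bb W (kk j) j) = bb j].

End Defs.

(* Main.v *)
Require Import Defs.
From HB Require Import structures.
From mathcomp Require Import all_boot all_order all_algebra.
From mathcomp Require Import zify.
Set Implicit Arguments. Unset Strict Implicit. Unset Printing Implicit Defensive.

Section Off.
Variables (n : nat) (w : 'I_n -> nat).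
Local Notation off i := (\sum_(l < n | (l < i)%N) w l)%N.

Lemma off_S (i : 'I_n) : off i.+1 = (off i + w i)%N.
Proof.
rewrite (bigD1 i) ?ltnSn //= addnC; congr (_ + _)%N.
apply: eq_bigl => l; rewrite ltnS -val_eqE /=.
by case: (ltngtP l i).
Qed.

Lemma off_mono (i j : nat) : (i <= j)%N -> (off i <= off j)%N.
Proof.
move=> hij; rewrite [X in (X <= _)%N]big_mkcond [X in (_ <= X)%N]big_mkcond.
apply: leq_sum => l _; case: ifP => h1; case: ifP => h2 //.
by move: h2; rewrite (leq_trans h1 hij).
Qed.

Lemma off_all : off n = (\sum_(l < n) w l)%N.
Proof. by apply: eq_bigl => l; rewrite ltn_ord. Qed.

Lemma off_lt (i j : 'I_n) a : (i < j)%N -> (a < w i)%N -> (off i + a < off j)%N.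
Proof.
move=> hij ha; apply: (@leq_trans (off i.+1)); last exact: off_mono.
by rewrite off_S ltn_add2l.
Qed.

Lemma off_lt_tot (i : 'I_n) a : (a < w i)%N -> (off i + a < \sum_(l < n) w l)%N.
Proof.
move=> ha; rewrite -off_all; apply: (@leq_trans (off i.+1)); last exact: off_mono.
by rewrite off_S ltn_add2l.
Qed.

Lemma off_inj (i j : 'I_n) a b : (a < w i)%N -> (b < w j)%N ->
  (off i + a = off j + b)%N -> i = j /\ a = b.
Proof.
move=> ha hb e.
have ij : i = j.
  apply/val_inj; case: (ltngtP i j) => // h.
  - by have := off_lt h ha; rewrite e; lia.
  - by have := off_lt h hb; rewrite -e; lia.
by split=> //; subst j; lia.
Qed.

Lemma off_ex y : (y < \sum_(l < n) w l)%N ->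
  exists j : 'I_n, (off j <= y < off j + w j)%N.
Proof.
move=> hy.
have exP : exists m, (y < off m)%N by exists n; rewrite off_all.
case: (ex_minnP exP) => m hm hmin.
case: m hm hmin => [|j] hm hmin.
  by move: hm; rewrite big_pred0.
have jn : (j < n)%N.
  rewrite ltnNge; apply/negP => hnj.
  have := hmin n; rewrite off_all => /(_ hy); lia.
exists (Ordinal jn) => /=.
rewrite -(off_S (Ordinal jn)) hm andbT leqNgt; apply/negP => h.
by have := hmin j h; lia.
Qed.

End Off.

Lemma exists_subset_card (T : finType) (X : {set T}) m :
  (m <= #|X|)%N -> exists Y : {set T}, Y \subset X /\ #|Y| = m.
Proof.
elim: m => [|m IH] hm; first by exists set0; rewrite sub0set cards0.
have [Y [YX cY]] := IH (ltnW hm).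
have : (0 < #|X :\: Y|)%N by rewrite cardsD (setIidPr YX) cY; lia.
case/card_gt0P => x; rewrite in_setD => /andP[xY xX].
exists (x |: Y); split; first by rewrite subUset sub1set xX YX.
by rewrite cardsU1 xY cY.
Qed.

Lemma sum_card (T : finType) (A : {set T}) : (\sum_(i : T) (i \in A : nat))%N = #|A|.
Proof. by rewrite -sum1_card [RHS]big_mkcond; apply: eq_bigr => i _; case: (i \in A). Qed.

Lemma enumP_filter (k : nat) (P : {set 'I_k}) : enum P = filter (mem P) (enum 'I_k).
Proof. by rewrite enumT. Qed.

Lemma enum_val_mono (k : nat) (P : {set 'I_k}) (j1 j2 : 'I_#|P|) :
  (j1 < j2)%N -> (enum_val j1 < enum_val j2)%N.
Proof.
move=> h.
have srt : sorted ltn [seq val i | i <- enum P].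
  rewrite enumP_filter.
  rewrite sorted_map; apply: sorted_filter; first by move=> a b c; apply: ltn_trans.
  by rewrite -sorted_map val_enum_ord iota_ltn_sorted.
have sz : size [seq val i | i <- enum P] = #|P| by rewrite size_map -cardE.
have e : forall j : 'I_#|P|, val (enum_val j) = nth 0%N [seq val i | i <- enum P] j.
  move=> j; rewrite (nth_map (enum_val j1)); last by rewrite -cardE.
  by rewrite -enum_val_nth.
rewrite !e.
by apply: (sorted_ltn_nth ltn_trans) => //; rewrite inE sz.
Qed.

Unset Implicit Arguments.
Unset Strict Implicit.

From HB Require Import structures.
From mathcomp Require Import all_boot all_order all_algebra.
From mathcomp Require Import reals.
From mathcomp Require Import zify.
Import Order.TTheory GRing.Theory Num.Theory.
Local Open Scope ring_scope.

Theorem lemma4p13 (R : realType) (k : nat) (dd : 'I_k -> nat) (s : nat)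
    (J : {set 'I_k}) :
  (forall i, dd i = 1%N \/ dd i = 2%N) ->
  (1 <= s <= dtot dd)%N ->
  J \subset JC dd ->
  calJ dd s J <->
  exists V : 'M[R]_(dtot dd),
    \rank V = s /\
    exists (W : 'M[R]_(dtot dd, s)) (r : nat) (bb : 'I_r -> nat) (kk : 'I_r -> 'I_k),
      (W^T == V)%MS /\ is_bce W bb kk /\
      [set kk j | j : 'I_r & (bb j == 1%N) && (dd (kk j) == 2%N)] = J.
Proof.
move=> hdd hs hJC; split; last first.
  case=> V [rV [W [r [bb [kk [eqV [[b1 b2 b3 b4 b5] hJ]]]]]]].
  have kkinj : injective kk.
    move=> j1 j2 e; apply/val_inj; case: (ltngtP j1 j2) => // h;
      by have := b3 _ _ h; rewrite e ltnn.
  have bbdd : forall j, (bb j <= dd (kk j))%N by move=> j; rewrite -b5 rank_leq_row.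
  have cJ : #|J| = (\sum_j ((bb j == 1%N) && (dd (kk j) == 2%N) : nat))%N.
    rewrite -hJ card_in_imset; last by move=> x y _ _; apply: kkinj.
    rewrite -sum1_card [LHS]big_mkcond /=. apply: eq_bigr => j _.
    by rewrite inE; case: (_ && _).
  rewrite /calJ hJC /=; apply/andP; split.
    rewrite leq_min; apply/andP; split.
      rewrite cJ -b2; apply: leq_sum => j _; case: (b1 j) => ->; by case: (_ && _).
    rewrite leq_subRL; last by case/andP: hs.
    rewrite cJ -b2 -big_split /=.
    apply: (@leq_trans (\sum_j dd (kk j))%N).
      apply: leq_sum => j _; move: (bbdd j); case: (b1 j) => ->;
        case: (hdd (kk j)) => -> //.
    rewrite /dtot [X in (_ <= X)%N](bigID (fun i => i \in [set kk j | j in [set: 'I_r]])) /=.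
    rewrite (big_imset _ (in2W kkinj)) /=.
    apply: leq_trans (leq_addr _ _); apply: eq_leq.
    by apply: eq_bigl => j; rewrite inE.
  apply/implyP => /eqP hcard.
  have allJC : forall i, dd i = 2%N.
    move=> i; have : i \in JC dd.
      have -> : JC dd = [set: 'I_k].
        apply/eqP; rewrite eqEcard subsetT /= cardsT card_ord hcard.
        exact: leqnn.
      by rewrite inE.
    by rewrite inE => /eqP.
  have -> : s = (#|J| + \sum_j ((bb j != 1%N) * 2))%N.
    rewrite cJ -b2 -big_split; apply: eq_bigr => j _ /=; rewrite allJC.
    by case: (b1 j) => ->.
  rewrite addKn -dvdn2; apply: dvdn_sum => j _; exact: dvdn_mull.

move=> hC; move/and3P: hC => [_ hmin hpar].
set X1 := [set i | dd i == 1%N].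
have hX1 : X1 = ~: JC dd.
  by apply/setP => i; rewrite !inE; case: (hdd i) => ->.
have ck : (#|JC dd| + #|X1| = k)%N by rewrite hX1 cardsC card_ord.
have cd : (dtot dd = #|X1| + #|JC dd| + #|JC dd|)%N.
  rewrite -!sum_card -!big_split /=; apply: eq_bigr => i _.
  by rewrite !inE; case: (hdd i) => ->.
have cJ : (#|J| <= #|JC dd|)%N := subset_leq_card hJC.
have c2 : #|JC dd :\: J| = (#|JC dd| - #|J|)%N by rewrite cardsD (setIidPr hJC).
set t := (s - #|J|)%N.
set b := minn t./2 #|JC dd :\: J|.
set a := (t - b.*2)%N.
have ht := odd_double_half t.
have et : t = (s - #|J|)%N by [].
have eb : b = minn t./2 #|JC dd :\: J| by [].
have ea : a = (t - b.*2)%N by [].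
have eX1 : X1 = [set i | dd i == 1%N] by [].
clearbody X1 a b t.
have ha : (a <= #|X1|)%N.
  move: hmin; rewrite leq_min => /andP[h1 h2].
  rewrite ea eb -!muln2.
  move: ck cd ht c2 h1 h2 hs hpar et cJ.
  rewrite -!muln2.
  set x := #|X1|; set j := #|J|; set C := #|JC dd|; set d := dtot dd.
  set c := #|JC dd :\: J|.
  clearbody x j C d c.
  move=> ck cd ht c2 h1 h2 hs hpar et cJ.
  have [hx|hx] := posnP x.
    have ot : odd t = false.
      by apply/negbTE; move: hpar; rewrite -et => /implyP; apply; apply/eqP; move: ck; rewrite hx addn0.
    move: ht; rewrite ot /= => ht; lia.
  move: ht; case: (odd t) => /= ht; lia.
have [A [AX1 cA]] := exists_subset_card ha.
have [B [BJ cB]] : exists B : {set 'I_k}, B \subset JC dd :\: J /\ #|B| = b.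
  by apply: exists_subset_card; rewrite eb geq_minr.
have hA : forall i, i \in A -> dd i = 1%N.
  by move=> i /(subsetP AX1); rewrite eX1 inE => /eqP.
have hB : forall i, i \in B -> dd i = 2%N /\ i \notin J.
  by move=> i /(subsetP BJ); rewrite !inE => /andP[-> /eqP].
have hJ2 : forall i, i \in J -> dd i = 2%N.
  by move=> i /(subsetP hJC); rewrite inE => /eqP.
pose P := J :|: A :|: B.
pose c := fun i => if i \in B then 2%N else 1%N.
have sumP : (\sum_(i in P) c i = s)%N.
  rewrite big_mkcond /=.
  transitivity (\sum_i ((i \in J) + (i \in A) + (i \in B) + (i \in B)))%N.
    apply: eq_bigr => i _; rewrite /c /P !inE.
    case iJ: (i \in J); case iA: (i \in A); case iB: (i \in B) => //=.
    all: try (by move: (hA i iA) (hJ2 i iJ) => ->).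
    all: try (by case: (hB i iB); rewrite iJ).
    all: try (by move: (hA i iA); case: (hB i iB) => ->).
  rewrite !big_split /= !sum_card cA cB.
  move: ea eb ht c2 hmin et cd hs cJ; rewrite leq_min -!muln2.
  set j := #|J|; set C := #|JC dd|; set d := dtot dd; set c' := #|JC dd :\: J|.
  clearbody j C d c'. move=> *; lia.
pose kk := fun j : 'I_#|P| => (enum_val j : 'I_k).
pose bb := fun j : 'I_#|P| => c (kk j).
have kkP : forall j, kk j \in P by move=> j; exact: enum_valP.
have bbdd : forall j, (bb j <= dd (kk j))%N.
  move=> j; rewrite /bb /c; case: ifP => iB; first by case: (hB _ iB) => ->.
  by case: (hdd (kk j)) => ->.
have sumbb : (\sum_j bb j = s)%N.
  by rewrite -sumP [RHS]big_enum_val.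
have kkmono : forall j1 j2 : 'I_#|P|, (j1 < j2)%N -> (kk j1 < kk j2)%N.
  by move=> j1 j2; exact: enum_val_mono.
have kkinj : injective kk.
  move=> j1 j2 e; apply/val_inj; case: (ltngtP j1 j2) => // h;
    by have := kkmono _ _ h; rewrite e ltnn.
pose h (y : 'I_s) : nat :=
  if [pick j : 'I_#|P| | (coff bb j <= y < coff bb j + bb j)%N] is Some j
  then (roff dd (kk j) + (y - coff bb j))%N else dtot dd.
pose W : 'M[R]_(dtot dd, s) := \matrix_(x, y) ((x : nat) == h y)%:R.
have h_at : forall (j : 'I_#|P|) o (y : 'I_s), (o < bb j)%N ->
    val y = (coff bb j + o)%N -> h y = (roff dd (kk j) + o)%N.
  move=> j o y ho hy; rewrite /h; case: pickP => [j' /andP[h1 h2] | none].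
    have hl : (y - coff bb j' < bb j')%N by rewrite ltn_subLR.
    have he : (coff bb j' + (y - coff bb j') = coff bb j + o)%N by rewrite subnKC // hy.
    have [e1 e2] := off_inj hl ho he.
    by subst j'; rewrite -e2.
  by have := none j; rewrite hy leq_addr /= ltn_add2l ho.
have h_ex : forall y : 'I_s, exists j o, (o < bb j)%N /\ val y = (coff bb j + o)%N.
  move=> y; have [j /andP[h1 h2]] := off_ex (w := bb) (y := y) ltac:(by rewrite sumbb).
  by exists j, (y - coff bb j)%N; rewrite ltn_subLR // subnKC.
have rowlt : forall (i : 'I_k) a0, (a0 < dd i)%N -> (roff dd i + a0 < dtot dd)%N.
  by move=> i a0 ha0; exact: off_lt_tot.
have collt : forall (j : 'I_#|P|) c0, (c0 < bb j)%N -> (coff bb j + c0 < s)%N.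
  by move=> j c0 hc0; rewrite -sumbb; exact: off_lt_tot.
have mxentryE : forall x y (hx : (x < dtot dd)%N) (hy : (y < s)%N),
    mxentry W x y = W (Ordinal hx) (Ordinal hy).
  move=> x y hx hy; rewrite /mxentry.
  case: insubP => [x' _ ex|]; last by rewrite hx.
  case: insubP => [y' _ ey|]; last by rewrite hy.
  by congr (W _ _); apply/val_inj.
have hinj : forall y1 y2 : 'I_s, h y1 = h y2 -> y1 = y2.
  move=> y1 y2.
  have [j1 [o1 [ho1 hy1]]] := h_ex y1; have [j2 [o2 [ho2 hy2]]] := h_ex y2.
  rewrite (h_at _ _ _ ho1 hy1) (h_at _ _ _ ho2 hy2) => e.
  have [e1 e2] := off_inj (leq_trans ho1 (bbdd j1)) (leq_trans ho2 (bbdd j2)) e.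
  have ej := kkinj _ _ e1; subst j2.
  by apply/val_inj; rewrite hy1 hy2 e2.
have hlt : forall y : 'I_s, (h y < dtot dd)%N.
  move=> y; have [j [o [ho hy]]] := h_ex y.
  by rewrite (h_at _ _ _ ho hy); apply: rowlt; exact: leq_trans ho (bbdd j).
have rkW : \rank W = s.
  apply/eqP; rewrite eqn_leq rank_leq_col /=.
  have eW : W^T *m W = 1%:M.
    apply/matrixP => y1 y2; rewrite !mxE.
    rewrite (bigD1 (Ordinal (hlt y1))) //= big1 ?addr0; last first.
      move=> x hx; rewrite !mxE.
      have -> : ((x : nat) == h y1) = false.
        by apply/negbTE; apply: contra hx => /eqP e; apply/eqP/val_inj.
      by rewrite mul0r.
    rewrite !mxE eqxx mul1r /=.
    by have -> : (h y1 == h y2) = (y1 == y2) by apply/idP/idP => [/eqP/hinj -> | /eqP ->].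
  by rewrite -[X in (X <= _)%N](mxrank1 R s) -eW; exact: mxrankM_maxr.
exists (<<W^T>>%MS); split; first by rewrite genmxE mxrank_tr.
exists W, #|P|, bb, kk; split; first by apply/eqmxP; apply: eqmx_sym; apply: genmxE.
split.
  split.
  - by move=> j; rewrite /bb /c; case: ifP; auto.
  - exact: sumbb.
  - exact: kkmono.
  - move=> j i hi; apply/matrixP => a0 c0; rewrite !mxE.
    rewrite (mxentryE _ _ (rowlt i a0 (ltn_ord a0)) (collt j c0 (ltn_ord c0))) mxE /=.
    rewrite (h_at j c0 _ (ltn_ord c0)) //.
    case: eqP => // e.
    have [e1 _] := off_inj (ltn_ord a0) (leq_trans (ltn_ord c0) (bbdd j)) e.
    by move: hi; rewrite e1 ltnn.
  - move=> j; have -> : bce_block bb W (kk j) j = pid_mx (bb j).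
      apply/matrixP => a0 c0; rewrite !mxE.
      rewrite (mxentryE _ _ (rowlt _ a0 (ltn_ord a0)) (collt j c0 (ltn_ord c0))) mxE /=.
      rewrite (h_at j c0 _ (ltn_ord c0)) // eqn_add2l.
      by case: eqP => //= ->; rewrite ltn_ord.
    by rewrite rank_pid_mx.
apply/setP => i; apply/imsetP/idP.
  case=> j; rewrite inE => /andP[/eqP hb /eqP hd] ->.
  have := kkP j; rewrite /P !inE.
  move: hb; rewrite /bb /c; case: ifP => // iB _.
  rewrite orbF; case/orP => // /hA; by rewrite hd.
move=> iJ; have iP : i \in P by rewrite /P !inE iJ.
exists (enum_rank_in iP i); last by rewrite /kk enum_rankK_in.
rewrite inE /bb /kk enum_rankK_in // /c.
case: ifP => [iB|_]; first by case: (hB i iB); rewrite iJ.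
by rewrite eqxx (hJ2 i iJ).
Qed.
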